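(* Let $\psi$ be an injective map from the positive integers to the positive integers and let $A=\{\psi(n): n\ge 1\}$. For every nonnegative integer $n$, \[ p^{A}(n)=\sum_{(N_0,N_1,N_2,\dots)}\ \prod_{j\ge 0} p^{A}_{1}(N_j), \] where the sum runs over all sequences $(N_0,N_1,N_2,\dots)$ of nonnegative integers (necessarily with only finitely many nonzero terms) satisfying $n=\sum_{i\ge 0}2^{i}N_i$.
   Context: For a set $A$ of positive integers and a positive integer $\alpha$, $p^{A}_{\alpha}(n)$ denotes the number of partitions of $n$ into parts from $A$ in which each part occurs at most $\alpha$ times, and $p^{A}(n)$ denotes the number of partitions of $n$ into parts from $A$ with no restriction on multiplicities. By convention $p^{A}_{\alpha}(0)=p^{A}(0)=1$, so the product on the right is effectively finite. (In the paper the sum is indexed by the rows of the ''solution matrix'' listing all nonnegative integer solutions of $n=\sum_{i\ge0}2^iN_i$.) *)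

(* Defs.v *)
From Stdlib Require Import ClassicalEpsilon.
From mathcomp Require Import all_boot.
Set Implicit Arguments. Unset Strict Implicit. Unset Printing Implicit Defensive.

Definition imageA (psi : nat -> nat) : pred nat :=
  fun a => if excluded_middle_informative (exists k, 0 < k /\ psi k = a)
           then true else false.

(* A partition of n is encoded by its multiplicity function m : part k |-> m k.
   Every part is <= n and every multiplicity is <= n, so 'I_n.+1 suffices.
   Index 0 must have multiplicity 0 (parts are positive and belong to A). *)
Definition is_partA (A : pred nat) (n : nat) (m : {ffun 'I_n.+1 -> 'I_n.+1}) : bool :=
  (\sum_(k < n.+1) k * m k == n) &&
  [forall k : 'I_n.+1, (0 < m k) ==> ((0 < k) && A k)].

Definition pA (A : pred nat) (n : nat) : nat :=
  #|[set m : {ffun 'I_n.+1 -> 'I_n.+1} | is_partA A m]|.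

Definition pA_alpha (A : pred nat) (alpha n : nat) : nat :=
  #|[set m : {ffun 'I_n.+1 -> 'I_n.+1} |
      is_partA A m && [forall k : 'I_n.+1, m k <= alpha]]|.

(* Solutions (N_0, N_1, ...) of n = sum_i 2^i N_i: necessarily N_i <= n and
   N_i = 0 for i > n, so they are exactly the functions N : 'I_n.+1 -> 'I_n.+1
   (extended by 0) with sum_i 2^i N_i = n. *)
Definition binary_solution (n : nat) (N : {ffun 'I_n.+1 -> 'I_n.+1}) : bool :=
  \sum_(i < n.+1) 2 ^ i * N i == n.

(* Main.v *)
Require Import Defs.
From mathcomp Require Import all_boot all_algebra zify.
Set Implicit Arguments. Unset Strict Implicit. Unset Printing Implicit Defensive.
Import GRing.Theory Num.Theory.
Local Open Scope ring_scope.

Definition eqm (k : nat) (p q : {poly int}) := forall i, (i < k)%N -> p`_i = q`_i.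

Lemma eqm_trans k p q r : eqm k p q -> eqm k q r -> eqm k p r.
Proof. by move=> H1 H2 i Hi; rewrite H1 // H2. Qed.
Lemma eqm_sym k p q : eqm k p q -> eqm k q p.
Proof. by move=> H i Hi; rewrite H. Qed.
Lemma eqmM k p q p' q' : eqm k p q -> eqm k p' q' -> eqm k (p * p') (q * q').
Proof.
move=> H1 H2 i Hi; rewrite !coefM; apply: eq_bigr => j _.
have hj : (j < k)%N by apply: leq_ltn_trans Hi; rewrite -ltnS.
have hij : (i - j < k)%N by apply: leq_ltn_trans Hi; exact: leq_subr.
by rewrite H1 // H2.
Qed.
Lemma eqm_prod k (I : finType) (F G : I -> {poly int}) :
  (forall i, eqm k (F i) (G i)) -> eqm k (\prod_i F i) (\prod_i G i).
Proof.
move=> H; apply: (big_ind2 (eqm k)) => //; first exact: eqmM.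
Qed.

Lemma prod_monom (I : finType) (c : I -> int) (e : I -> nat) :
  \prod_i (c i *: 'X^(e i)) = (\prod_i c i) *: ('X^(\sum_i e i) : {poly int}).
Proof.
rewrite -mul_polyC; under eq_bigr do rewrite -mul_polyC.
rewrite big_split /= -rmorph_prod; congr (_ * _).
by rewrite (big_morph _ (@exprD _ 'X) (expr0 _)).
Qed.

Lemma coef_prod_sum (I J : finType) (a w : I -> J -> nat) s :
 (\prod_(i:I) \sum_(j:J) (a i j)%:R *: 'X^(w i j) : {poly int})`_s =
 ((\sum_(f : {ffun I -> J} | (\sum_i w i (f i) == s)) \prod_i a i (f i))%N)%:R.
Proof.
rewrite bigA_distr_bigA /=; under eq_bigr do rewrite prod_monom.
rewrite coef_sumMXn natr_sum; apply: eq_bigr => f _.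
by rewrite natr_prod.
Qed.

Lemma prod_bool (I : finType) (b : pred I) :
  (\prod_(i : I) (b i : nat) = [forall i, b i])%N.
Proof.
case: (boolP [forall i, b i]) => [/forallP H|/forallPn [i Hi]].
  by rewrite big1 // => i _; rewrite H.
by rewrite (bigD1 i) //= (negbTE Hi) mul0n.
Qed.

Lemma card_split (I J : finType) (P : {ffun I -> J} -> bool) (w : I -> J -> nat) (b : I -> J -> bool) s :
  (forall f, P f = (\sum_i w i (f i) == s)%N && [forall i, b i (f i)]) ->
  #|[set f | P f]| = (\sum_(f : {ffun I -> J} | \sum_i w i (f i) == s) \prod_i (b i (f i) : nat))%N.
Proof.
move=> HP; rewrite -sum1_card.
under eq_bigl do rewrite inE HP.
rewrite big_mkcondr /=; apply: eq_bigr => f _.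
by rewrite prod_bool; case: [forall i, _].
Qed.

Definition okA (A : pred nat) k := (0 < k)%N && A k.

Lemma step1 (A : pred nat) n :
  (pA A n)%:R = (\prod_(k : 'I_n.+1) \sum_(j : 'I_n.+1)
     (((0 < j) ==> okA A k)%N : nat)%:R *: 'X^(k * j) : {poly int})`_n.
Proof.
rewrite coef_prod_sum /pA; rewrite (@card_split _ _ _ (fun (k j : 'I_n.+1) => (k * j)%N) (fun (k : 'I_n.+1) (j : 'I_n.+1) => ((0 < j) ==> okA A k)%N) n) //.
Qed.

Definition hh (A : pred nat) (c k : nat) : {poly int} := 1 + (okA A k : nat)%:R *: 'X^(c * k).

Lemma Dcoef (A : pred nat) t :
  (pA_alpha A 1 t)%:R = (\prod_(k : 'I_t.+1) hh A 1 k)`_t.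
Proof.
have -> : \prod_(k : 'I_t.+1) hh A 1 k = \prod_(k : 'I_t.+1) \sum_(j : 'I_t.+1)
     ((((0 < j) ==> okA A k) && (j <= 1))%N : nat)%:R *: 'X^(k * j).
  apply: eq_bigr => k _.
  rewrite /hh; case: t k => [|t] k.
    by rewrite big_ord1; case: k => [[|//] ?]; rewrite /okA /= scale0r addr0 muln0 scale1r.
  rewrite 2!big_ord_recl /= big1 ?addr0; last first.
    by move=> j _; rewrite /bump /= andbF scale0r.
  by rewrite /bump /= muln0 scale1r andbT muln1 mul1n.
rewrite coef_prod_sum /pA_alpha.
rewrite (@card_split _ _ _ (fun (k j : 'I_t.+1) => (k * j)%N) (fun (k : 'I_t.+1) (j : 'I_t.+1) => (((0 < j) ==> okA A k) && (j <= 1))%N) t) //.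
move=> f; rewrite /is_partA -andbA; congr (_ && _).
apply/andP/forallP => [[/forallP H1 /forallP H2] i|H]; first by rewrite H1 H2.
by split; apply/forallP => i; have /andP[] := H i.
Qed.

Lemma eqm_refl k p : eqm k p p. Proof. by []. Qed.

Lemma geom (p : {poly int}) m :
  \prod_(i < m) (1 + p ^+ (2 ^ i)) = \sum_(j < 2 ^ m) p ^+ j.
Proof.
elim: m => [|m IH]; first by rewrite big_ord0 expn0 big_ord1 expr0.
rewrite big_ord_recr /= IH expnS mul2n -addnn big_split_ord /=.
rewrite mulrDr mulr1; congr (_ + _).
rewrite mulrC big_distrr /=; apply: eq_bigr => j _.
by rewrite exprD.
Qed.

Lemma step3 (A : pred nat) n (k : nat) :
  eqm n.+1 (\sum_(j : 'I_n.+1) (((0 < j) ==> okA A k)%N : nat)%:R *: 'X^(k * j))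
           (\prod_(i < n.+1) hh A (2 ^ i) k).
Proof.
case: (boolP (okA A k)) => hk.
  have k0 : (0 < k)%N by case/andP: hk.
  under eq_bigr do rewrite implybT scale1r.
  have -> : \prod_(i < n.+1) hh A (2 ^ i) k = \prod_(i < n.+1) (1 + ('X^k) ^+ (2 ^ i)).
    by apply: eq_bigr => i _; rewrite /hh hk scale1r mulnC exprM.
  rewrite geom => i Hi; rewrite !coef_sum.
  rewrite (bigID (fun j : 'I_(2 ^ n.+1) => (j < n.+1)%N)) /= [X in _ = _ + X]big1 ?addr0; last first.
    move=> j Hj; rewrite -exprM coefXn.
    have H1 : (j <= k * j)%N by apply: leq_pmull.
    have -> : (i == k * j)%N = false by apply: ltn_eqF; move: Hj Hi H1; clear; lia.
    by [].
  rewrite (big_ord_widen (2 ^ n.+1) (fun j => ('X^(k * j) : {poly int})`_i)) /=; last first.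
    by apply: ltnW; apply: ltn_expl.
  by apply: eq_bigr => j _; rewrite exprM.
have -> : \prod_(i < n.+1) hh A (2 ^ i) k = 1.
  by apply: big1 => i _; rewrite /hh (negbTE hk) scale0r addr0.
rewrite big_ord_recl /= big1 ?addr0; last first.
  by move=> j _; rewrite /bump /= scale0r.
by rewrite muln0 scale1r.
Qed.

Lemma hh_widen (A : pred nat) t N : (t < N)%N ->
  eqm t.+1 (\prod_(k : 'I_t.+1) hh A 1 k) (\prod_(k : 'I_N) hh A 1 k).
Proof.
move=> tN.
rewrite -(big_mkord xpredT (fun k => hh A 1 k)) -(big_mkord xpredT (fun k => hh A 1 k)).
rewrite (@big_cat_nat _ _ _ t.+1 0 N) /=; last by []; last by [].
rewrite -[X in eqm _ X _]mulr1; apply: eqmM => //.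
rewrite big_nat_cond.
apply: (big_ind (fun p => eqm t.+1 1 p)) => //.
  by move=> x y Hx Hy; rewrite -(mulr1 1); apply: eqmM.
move=> k /andP[/andP[Hk _] _] i Hi.
rewrite /hh coefD coefZ coefXn mul1n.
have -> : (i == k)%N = false by apply/negbTE; move: Hk Hi; clear; lia.
by rewrite mulr0 addr0.
Qed.

Lemma step5 (A : pred nat) N c : (0 < c)%N ->
  eqm N (\prod_(k : 'I_N) hh A c k)
        (\sum_(t : 'I_N) (pA_alpha A 1 t)%:R *: 'X^(c * t)).
Proof.
move=> c0.
have E1 : \prod_(k : 'I_N) hh A c k = (\prod_(k : 'I_N) hh A 1 k) \Po 'X^c.
  rewrite rmorph_prod; apply: eq_bigr => k _.
  by rewrite /= /hh comp_polyD comp_polyC comp_polyZ rmorphXn /= comp_polyX -exprM mul1n.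
have E2 : \sum_(t : 'I_N) (pA_alpha A 1 t)%:R *: ('X^(c * t) : {poly int}) =
   (\sum_(t : 'I_N) (pA_alpha A 1 t)%:R *: 'X^(1 * t)) \Po 'X^c.
  rewrite (big_morph (fun p : {poly int} => p \Po 'X^c) (fun p r => comp_polyD p r _) (comp_poly0 _)); apply: eq_bigr => k _.
  by rewrite /= comp_polyZ rmorphXn /= comp_polyX -exprM ?mul1n.
move=> s Hs; rewrite E1 E2 !coef_comp_poly_Xn //; case: ifP => // _.
have tN : (s %/ c < N)%N by apply: leq_ltn_trans Hs; apply: leq_div.
rewrite coef_sumMXn.
rewrite [RHS](eq_bigl (fun i : 'I_N => nat_of_ord i == (s %/ c)%N)); last by move=> i; rewrite /= ?mul1n.
rewrite (big_ord1_eq _ (fun i => (pA_alpha A 1 i)%:R)) tN Dcoef.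
by rewrite (hh_widen A tN (ltnSn _)).
Qed.

Lemma mainA (A : pred nat) n :
  pA A n = (\sum_(N : {ffun 'I_n.+1 -> 'I_n.+1} | binary_solution N)
     \prod_(j < n.+1) pA_alpha A 1 (N j))%N.
Proof.
apply/eqP; rewrite -(eqr_nat int); apply/eqP.
rewrite step1.
have H : eqm n.+1 (\prod_(k : 'I_n.+1) \sum_(j : 'I_n.+1)
     (((0 < j) ==> okA A k)%N : nat)%:R *: 'X^(k * j))
   (\prod_(i : 'I_n.+1) \sum_(t : 'I_n.+1) (pA_alpha A 1 t)%:R *: 'X^(2 ^ i * t)).
  apply: (@eqm_trans _ _ (\prod_(k : 'I_n.+1) \prod_(i < n.+1) hh A (2 ^ i) k)).
    by apply: eqm_prod => k; apply: step3.
  rewrite exchange_big /=; apply: eqm_prod => i.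
  by apply: step5; rewrite expn_gt0.
rewrite (H n (ltnSn n)).
by rewrite coef_prod_sum.
Qed.

Local Close Scope ring_scope.

Theorem mainTheorem1 (psi : nat -> nat)
  (psi_pos : forall k, 0 < k -> 0 < psi k)
  (psi_inj : forall k l, 0 < k -> 0 < l -> psi k = psi l -> k = l)
  (n : nat) :
  pA (imageA psi) n =
  \sum_(N : {ffun 'I_n.+1 -> 'I_n.+1} | binary_solution N)
     \prod_(j < n.+1) pA_alpha (imageA psi) 1 (N j).
Proof. exact: mainA. Qed.
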